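(* The linear operator $\bar P:\text{Ш}_e(A)\bar\otimes\text{Ш}_e(A)\to\text{Ш}_e(A)\bar\otimes\text{Ш}_e(A)$, $$\bar P(\mathfrak{a}\bar\otimes\mathfrak{b})=P_e(\mathfrak{a})\bar\otimes\varepsilon_e(\mathfrak{b})1_A+\mu\,\mathfrak{a}\bar\otimes\varepsilon_e(\mathfrak{b})1_A+\mathfrak{a}\bar\otimes P_e(\mathfrak{b}),$$ is an extended Rota-Baxter operator of weight $(\lambda,\kappa)$ on the commutative algebra $\text{Ш}_e(A)\bar\otimes\text{Ш}_e(A)$.
   Context: $\mathbf{k}$ is a commutative unitary ring, $\lambda,\kappa\in\mathbf{k}$, and $\mu\in\mathbf{k}$ a root of $t^2-\lambda t+\kappa$. An extended Rota-Baxter operator of weight $(\lambda,\kappa)$ on an algebra $R$ is a linear $P$ with $P(x)P(y)=P(xP(y))+P(P(x)y)+\lambda P(xy)+\kappa xy$. $A=(A,m_A,\mu_A,\Delta_A,\varepsilon_A)$ is a commutative bialgebra and $(\text{Ш}_e(A),\diamond,P_e,j_A)$ the free commutative extended Rota-Baxter algebra of weight $(\lambda,\kappa)$ on $A$: $\text{Ш}_e(A)=\bigoplus_{n\ge1}A^{\otimes n}$, $P_e(\mathfrak{a})=1_A\otimes\mathfrak{a}$, with product $\diamond$ defined recursively by $a_0\diamond b_0=a_0b_0$, $a_0\diamond(b_0\otimes\mathfrak{b}')=a_0b_0\otimes\mathfrak{b}'$, $(a_0\otimes\mathfrak{a}')\diamond b_0=a_0b_0\otimes\mathfrak{a}'$,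 and $(a_0\otimes\mathfrak{a}')\diamond(b_0\otimes\mathfrak{b}')=a_0b_0\otimes(\mathfrak{a}'\diamond(1_A\otimes\mathfrak{b}')+(1_A\otimes\mathfrak{a}')\diamond\mathfrak{b}'+\lambda\mathfrak{a}'\diamond\mathfrak{b}')+\kappa a_0b_0(\mathfrak{a}'\diamond\mathfrak{b}')$. $\varepsilon_e:\text{Ш}_e(A)\to\mathbf{k}$ is the unique extended Rota-Baxter algebra homomorphism with $\varepsilon_e\circ j_A=\varepsilon_A$ and $\varepsilon_e\circ P_e=-\mu\,\varepsilon_e$. $\bar\otimes$ denotes the tensor product between copies of $\text{Ш}_e(A)$ (to distinguish it from the tensor inside $\text{Ш}_e(A)$); $\text{Ш}_e(A)\bar\otimes\text{Ш}_e(A)$ has the componentwise product. *)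

(* Defs.v *)
From HB Require Import structures.
From mathcomp Require Import all_boot all_order all_algebra.
Set Implicit Arguments. Unset Strict Implicit. Unset Printing Implicit Defensive.
Import GRing.Theory.
Local Open Scope ring_scope.

Definition lin (k : comNzRingType) (M N : lmodType k) (f : M -> N) : Prop :=
  forall (a : k) (x y : M), f (a *: x + y) = a *: f x + f y.

Definition bilin (k : comNzRingType) (M N W : lmodType k) (t : M -> N -> W) : Prop :=
  (forall n, lin (fun m => t m n)) /\ (forall m, lin (t m)).

Definition is_tensor (k : comNzRingType) (M N T : lmodType k) (t : M -> N -> T) : Prop :=
  bilin t /\
  forall (W : lmodType k) (f : M -> N -> W), bilin f ->
    (exists g : T -> W, lin g /\ forall m n, g (t m n) = f m n) /\
    (forall g1 g2 : T -> W, lin g1 -> lin g2 ->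
       (forall m n, g1 (t m n) = g2 (t m n)) -> forall x, g1 x = g2 x).

Definition is_tensor_alg (k : comNzRingType) (A B T : algType k) (t : A -> B -> T) : Prop :=
  is_tensor t /\ t 1 1 = 1 /\
  forall a b c d, t a b * t c d = t (a * c) (b * d).

Definition alg_hom (k : comNzRingType) (A B : algType k) (f : A -> B) : Prop :=
  lin f /\ f 1 = 1 /\ forall x y, f (x * y) = f x * f y.

Definition ext_RB (k : comNzRingType) (R : algType k) (lam kap : k) (P : R -> R) : Prop :=
  lin P /\
  forall x y, P x * P y = P (x * P y) + P (P x * y) + lam *: P (x * y) + kap *: (x * y).

(* Coalgebra axioms are stated via the maps
   eps (x) id, id (x) eps, Delta (x) id, id (x) Delta and the associator,
   which exist uniquely by the universal property of the tensor product. *)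
Definition is_bialgebra (k : comNzRingType) (A AA : algType k) (tA : A -> A -> AA)
    (Delta : A -> AA) (eps : A -> k^o) : Prop :=
  is_tensor_alg tA /\ alg_hom Delta /\ alg_hom eps /\
  (forall c : AA -> A, lin c -> (forall x y, c (tA x y) = eps x *: y) ->
     forall a, c (Delta a) = a) /\
  (forall c : AA -> A, lin c -> (forall x y, c (tA x y) = eps y *: x) ->
     forall a, c (Delta a) = a) /\
  (forall (T3l T3r : lmodType k) (tl : AA -> A -> T3l) (tr : A -> AA -> T3r),
     is_tensor tl -> is_tensor tr ->
     forall (h1 : AA -> T3l) (h2 : AA -> T3r) (al : T3l -> T3r),
       lin h1 -> lin h2 -> lin al ->
       (forall x y, h1 (tA x y) = tl (Delta x) y) ->
       (forall x y, h2 (tA x y) = tr x (Delta y)) ->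
       (forall x y z, al (tl (tA x y) z) = tr x (tA y z)) ->
       forall a, al (h1 (Delta a)) = h2 (Delta a)).

Definition is_free_comm_ERB (k : comNzRingType) (lam kap : k) (A Sh : comAlgType k)
    (j : A -> Sh) (P : Sh -> Sh) : Prop :=
  alg_hom j /\ ext_RB lam kap P /\
  forall (R : comAlgType k) (Q : R -> R) (f : A -> R),
    ext_RB lam kap Q -> alg_hom f ->
    (exists g : Sh -> R, alg_hom g /\ (forall a, g (j a) = f a) /\
                         (forall x, g (P x) = Q (g x))) /\
    (forall g1 g2 : Sh -> R, alg_hom g1 -> alg_hom g2 ->
       (forall a, g1 (j a) = f a) -> (forall x, g1 (P x) = Q (g1 x)) ->
       (forall a, g2 (j a) = f a) -> (forall x, g2 (P x) = Q (g2 x)) ->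
       forall x, g1 x = g2 x).

(* Main.v *)
Require Import Defs.
From HB Require Import structures.
From mathcomp Require Import all_boot all_order all_algebra.
From mathcomp Require Import ring.
Import GRing.Theory.
Local Open Scope ring_scope.

Lemma lin0 {k : comNzRingType} {M N : lmodType k} {f : M -> N} : lin f -> f 0 = 0.
Proof.
move=> h; have := h 1 0 0; rewrite !scale1r addr0 => e.
by apply: (@addrI _ (f 0)); rewrite addr0 -e.
Qed.

Lemma linD {k : comNzRingType} {M N : lmodType k} {f : M -> N} : lin f ->
  forall x y, f (x + y) = f x + f y.
Proof. by move=> h x y; have := h 1 x y; rewrite !scale1r. Qed.

Lemma linZ {k : comNzRingType} {M N : lmodType k} {f : M -> N} : lin f ->
  forall a x, f (a *: x) = a *: f x.
Proof. by move=> h a x; have := h a x 0; rewrite !addr0 (lin0 h) addr0. Qed.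

Definition sc {k : comNzRingType} (T : algType k) (a : k) : T := a%:A.

Lemma scE {k : comNzRingType} (T : algType k) (a : k) (x : T) : a *: x = sc T a * x.
Proof. by rewrite /sc mulr_algl. Qed.

Lemma scM {k : comNzRingType} (T : algType k) (a b : k) : sc T (a * b) = sc T a * sc T b.
Proof. by rewrite /sc -scalerA mulr_algl. Qed.

Lemma scN {k : comNzRingType} (T : algType k) (a : k) : sc T (- a) = - sc T a.
Proof. by rewrite /sc scaleNr. Qed.

Lemma scD {k : comNzRingType} (T : algType k) (a b : k) : sc T (a + b) = sc T a + sc T b.
Proof. by rewrite /sc scalerDl. Qed.

Lemma sc1 {k : comNzRingType} (T : algType k) : sc T 1 = 1.
Proof. by rewrite /sc scale1r. Qed.

Theorem lemma4p3 (k : comNzRingType) (lam kap mu : k)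
  (hmu : mu ^+ 2 - lam * mu + kap = 0)
  (A AA : comAlgType k) (tA : A -> A -> AA) (DeltaA : A -> AA) (epsA : A -> k^o)
  (hA : is_bialgebra tA DeltaA epsA)
  (Sh : comAlgType k) (jA : A -> Sh) (Pe : Sh -> Sh)
  (hSh : is_free_comm_ERB lam kap jA Pe)
  (eps_e : Sh -> k^o) (heps_hom : alg_hom eps_e)
  (heps_j : forall a, eps_e (jA a) = epsA a)
  (heps_P : forall x, eps_e (Pe x) = - mu * eps_e x)
  (T : comAlgType k) (tT : Sh -> Sh -> T) (hT : is_tensor_alg tT)
  (Pbar : T -> T) (hPbar_lin : lin Pbar)
  (hPbar : forall a b : Sh,
     Pbar (tT a b) = tT (Pe a) (eps_e b *: 1) + mu *: tT a (eps_e b *: 1)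
                     + tT a (Pe b)) :
  ext_RB lam kap Pbar.
Proof.
move: hT => [[[tbl tbr] tuniq] [t11 tM]].
move: hSh => [_ [[PeL PeRB] _]].
move: heps_hom => [epsL [eps1 epsM]].
have tZr X a Y : tT X (a *: Y) = a *: tT X Y by rewrite (linZ (tbr X)).
have tZl X a Y : tT (a *: X) Y = a *: tT X Y by rewrite (linZ (tbl Y)).
have PbD := linD hPbar_lin; have PbZ := linZ hPbar_lin.
have PeD := linD PeL; have PeZ := linZ PeL.
have epsZ := linZ epsL.
pose L X := tT X 1; pose R Y := tT 1 Y.
have tLR X Y : tT X Y = L X * R Y by rewrite /L /R tM mulr1 mul1r.
have LM X Y : L (X * Y) = L X * L Y by rewrite /L tM mulr1.
have RM X Y : R (X * Y) = R X * R Y by rewrite /R tM mulr1.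
have L1 : L 1 = 1 by []. have R1 : R 1 = 1 by [].
have LZ a X : L (a *: X) = a *: L X by rewrite /L tZl.
have RZ a X : R (a *: X) = a *: R X by rewrite /R tZr.
have hkap : sc T kap = sc T lam * sc T mu - sc T mu ^+ 2.
  have -> : kap = lam * mu - mu ^+ 2.
    by rewrite -[RHS]addr0 -hmu; ring.
  by rewrite scD scN scM [mu ^+ 2]expr2 scM expr2.
have key a b c d : Pbar (tT a b) * Pbar (tT c d) =
   Pbar (tT a b * Pbar (tT c d)) + Pbar (Pbar (tT a b) * tT c d)
   + lam *: Pbar (tT a b * tT c d) + kap *: (tT a b * tT c d).
  rewrite !hPbar !tZr !(mulrDl, mulrDr).
  rewrite -!scalerAl -!scalerAr !tM ?(mulr1, mul1r).
  rewrite !(PbD, PbZ) !hPbar !tZr !epsM !heps_P ?eps1 ?(mulr1, mul1r).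
  rewrite !tLR !(LM, RM) ?L1 ?R1 ?(LZ, RZ) ?L1 ?R1 ?(mulr1, mul1r).
  have LD X Y : L (X + Y) = L X + L Y := linD (tbl 1) X Y.
  have RD X Y : R (X + Y) = R X + R Y := linD (tbr 1) X Y.
  have hL : L (Pe (a * Pe c)) = L (Pe a) * L (Pe c) - L (Pe (Pe a * c))
      - lam *: L (Pe (a * c)) - kap *: (L a * L c).
    by rewrite -LM PeRB !LD !LZ LM !scE; ring.
  have hR : R (Pe (b * Pe d)) = R (Pe b) * R (Pe d) - R (Pe (Pe b * d))
      - lam *: R (Pe (b * d)) - kap *: (R b * R d).
    by rewrite -RM PeRB !RD !RZ RM !scE; ring.
  rewrite hL hR !scE !scM !scN hkap; ring.
have uniq := (tuniq T tT (conj tbl tbr)).2.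
split=> // x y.
have step1 c d x' : Pbar x' * Pbar (tT c d) =
   Pbar (x' * Pbar (tT c d)) + Pbar (Pbar x' * tT c d)
   + lam *: Pbar (x' * tT c d) + kap *: (x' * tT c d).
  apply: (uniq (fun x => Pbar x * Pbar (tT c d))
    (fun x => Pbar (x * Pbar (tT c d)) + Pbar (Pbar x * tT c d)
   + lam *: Pbar (x * tT c d) + kap *: (x * tT c d))) => //.
  - by move=> a x1 x2; rewrite PbD PbZ mulrDl -scalerAl.
  - move=> a x1 x2; rewrite !(mulrDl, PbD, PbZ) -!scalerAl !(PbD, PbZ) !scE; ring.
apply: (uniq (fun y => Pbar x * Pbar y)
    (fun y => Pbar (x * Pbar y) + Pbar (Pbar x * y)
   + lam *: Pbar (x * y) + kap *: (x * y))) => //.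
- by move=> a x1 x2; rewrite PbD PbZ mulrDr -scalerAr.
- move=> a x1 x2; rewrite !(mulrDr, PbD, PbZ) -!scalerAr !(PbD, PbZ) !scE; ring.
Qed.
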